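(* There is an absolute constant $C>0$ such that the following holds for every $n\ge2$. Let $v_i:=i$ for $i=1,\dots,n$. Then there exist $s_1,\dots,s_n\in[0,1)$ such that for every $t\in\mathbb{R}$, every $\gamma\in[0,1]$ and every sector $S$ of aperture $\gamma$, $$\big|N_S(s_1+v_1t,\dots,s_n+v_nt)-\gamma n\big|\ \le\ C\big(\sqrt{n\gamma\log n}+\log n\big).$$ Consequently $B(s_1+v_1t,\dots,s_n+v_nt)\le C'\sqrt{n\log n}$ for all $t\in\mathbb{R}$, for an absolute constant $C'$.
   Context: For $r\in\mathbb{R}$, $\{r\}:=r-\lfloor r\rfloor$. A sector of aperture $\gamma\in[0,1]$ is a set $S_{\alpha,\alpha+\gamma}:=\{x\in[0,1]:\{x-\alpha\}\le\gamma\}$ with $\alpha\in\mathbb{R}$. $N_S(x_1,\dots,x_n):=|\{i:\{x_i\}\in S\}|$. The bias is $B(r_1,\dots,r_n):=\sup_{0\le a\le b\le1}\big|\,|\{i:\{r_i\}\in[a,b]\}|-n(b-a)\big|$. $\log$ is base 2. *)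

(* Defs.v *)
From Stdlib Require Import Reals Lra Lia List Bool.
Open Scope bool_scope.
Open Scope R_scope.

(* {r} := r - floor r.  Stdlib's Int_part is the floor (up r - 1). *)
Definition frac (r : R) : R := r - IZR (Int_part r).

Definition log2 (x : R) : R := ln x / ln 2.

Definition Rleb (x y : R) : bool := if Rle_dec x y then true else false.

Definition in_sector (alpha gamma x : R) : bool :=
  Rleb 0 x && Rleb x 1 && Rleb (frac (x - alpha)) gamma.

Definition N_sector (alpha gamma : R) (n : nat) (x : nat -> R) : nat :=
  length (filter (fun i => in_sector alpha gamma (frac (x i))) (seq 1 n)).

Definition N_interval (a b : R) (n : nat) (r : nat -> R) : nat :=
  length (filter (fun i => Rleb a (frac (r i)) && Rleb (frac (r i)) b) (seq 1 n)).

(* "B(r_1,...,r_n) <= X": the supremum over 0<=a<=b<=1 of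
   | N_[a,b] - n(b-a) | is at most X, i.e. every term is at most X. *)
Definition bias_le (n : nat) (r : nat -> R) (X : R) : Prop :=
  forall a b : R, 0 <= a -> a <= b -> b <= 1 ->
    Rabs (INR (N_interval a b n r) - INR n * (b - a)) <= X.

(* Main.v *)
Require Import Defs.
From Stdlib Require Import Reals List.
From Stdlib Require Import Lra Lia ZArith Classical_Prop.
Open Scope R_scope.


Fixpoint sumN (K : nat) (f : nat -> R) : R :=
  match K with O => 0 | S K' => sumN K' f + f K' end.

Lemma sumN_ext K f g : (forall x, (x < K)%nat -> f x = g x) -> sumN K f = sumN K g.
Proof. induction K; simpl; intros H; auto. rewrite IHK by (intros; apply H; lia). rewrite H by lia. auto. Qed.

Lemma sumN_le K f g : (forall x, (x < K)%nat -> f x <= g x) -> sumN K f <= sumN K g.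
Proof. induction K; simpl; intros H; [lra|]. assert (H1 := H K ltac:(lia)). assert (sumN K f <= sumN K g) by (apply IHK; intros; apply H; lia). lra. Qed.

Lemma sumN_plus K f g : sumN K (fun x => f x + g x) = sumN K f + sumN K g.
Proof. induction K; simpl; [lra|]. rewrite IHK. lra. Qed.

Lemma sumN_scal K c f : sumN K (fun x => c * f x) = c * sumN K f.
Proof. induction K; simpl; [lra|]. rewrite IHK. lra. Qed.

Lemma sumN_const K c : sumN K (fun _ => c) = INR K * c.
Proof. induction K; simpl sumN; [simpl; lra|]. rewrite IHK, S_INR. lra. Qed.

Lemma sumN_nonneg K f : (forall x, (x < K)%nat -> 0 <= f x) -> 0 <= sumN K f.
Proof. intros H. apply Rle_trans with (sumN K (fun _ => 0)). rewrite sumN_const; lra. apply sumN_le; auto. Qed.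

Lemma sumN_term K f x0 : (forall x, (x < K)%nat -> 0 <= f x) -> (x0 < K)%nat -> f x0 <= sumN K f.
Proof. induction K; intros H Hx; [lia|]. simpl. destruct (Nat.eq_dec x0 K).
- subst. assert (0 <= sumN K f) by (apply sumN_nonneg; intros; apply H; lia). lra.
- assert (f x0 <= sumN K f) by (apply IHK; [intros; apply H; lia| lia]). assert (0 <= f K) by (apply H; lia). lra. Qed.

Lemma sumN_exists K f g : sumN K f < sumN K g -> exists x, (x < K)%nat /\ f x < g x.
Proof. intros H. destruct (Classical_Prop.classic (exists x, (x < K)%nat /\ f x < g x)) as [E|E]; auto.
  exfalso. assert (sumN K g <= sumN K f). apply sumN_le. intros x Hx. destruct (Rle_lt_dec (g x) (f x)); auto. exfalso; apply E; eauto. lra. Qed.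

Lemma sumN_swap K1 K2 f : sumN K1 (fun x => sumN K2 (fun y => f x y)) = sumN K2 (fun y => sumN K1 (fun x => f x y)).
Proof. induction K1; simpl. rewrite sumN_const; simpl; lra. rewrite IHK1, <- sumN_plus. auto. Qed.

Lemma sumN_shift1 K g : sumN K (fun x => g (S x)) = sumN K g - g O + g K.
Proof. induction K; simpl; [lra|]. rewrite IHK. lra. Qed.

Lemma sumN_modshift K f d : (0 < K)%nat -> sumN K (fun x => f ((x + d) mod K)%nat) = sumN K f.
Proof. intros HK. induction d.
- apply sumN_ext. intros x Hx. rewrite Nat.add_0_r, Nat.mod_small; auto.
- rewrite <- IHd. rewrite (sumN_ext K _ (fun x => f ((S x + d) mod K)%nat)) by (intros; f_equal; f_equal; lia).
  rewrite (sumN_shift1 K (fun x => f ((x + d) mod K)%nat)).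
  replace ((K + d) mod K)%nat with ((0 + d) mod K)%nat. lra.
  replace (K + d)%nat with (d + 1 * K)%nat by lia. rewrite Nat.Div0.mod_add. auto. Qed.

Lemma sumN_ind K L A B : (L < K)%nat ->
  sumN K (fun x => if Nat.leb x L then A else B) = INR (S L) * A + INR (K - S L) * B.
Proof. intros H. induction K; [lia|]. simpl sumN. destruct (Nat.eq_dec L K).
- subst. replace (S K - S K)%nat with O by lia. rewrite Nat.leb_refl.
  rewrite (sumN_ext K _ (fun _ => A)) by (intros x Hx; destruct (Nat.leb_spec x K); auto; lia).
  rewrite sumN_const. replace (INR 0) with 0 by reflexivity. rewrite (S_INR K). lra.
- rewrite IHK by lia. destruct (Nat.leb_spec K L); [lia|]. replace (S K - S L)%nat with (S (K - S L)) by lia. rewrite (S_INR (K - S L)). lra. Qed.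

Fixpoint prodI (m : nat) (f : nat -> R) : R := match m with O => 1 | S m' => prodI m' f * f (S m') end.
Fixpoint sumI (m : nat) (f : nat -> R) : R := match m with O => 0 | S m' => sumI m' f + f (S m') end.

Lemma prodI_ext m f g : (forall i, (1 <= i <= m)%nat -> f i = g i) -> prodI m f = prodI m g.
Proof. induction m; simpl; intros H; auto. rewrite IHm by (intros; apply H; lia). rewrite H by lia. auto. Qed.

Lemma prodI_const m c : prodI m (fun _ => c) = c ^ m.
Proof. induction m; simpl; auto. rewrite IHm; lra. Qed.

Lemma exp_sumI m h f : exp (h * sumI m f) = prodI m (fun i => exp (h * f i)).
Proof. induction m; simpl. rewrite Rmult_0_r, exp_0; auto. rewrite Rmult_plus_distr_l, exp_plus, IHm; auto. Qed.

Lemma len_filter_seq m (p : nat -> bool) : INR (length (filter p (seq 1 m))) = sumI m (fun i => if p i then 1 else 0).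
Proof. induction m; simpl sumI; auto. rewrite seq_S, filter_app, length_app, plus_INR, IHm. simpl.
  replace (S m) with (S m) by lia. destruct (p (S m)); simpl; lra. Qed.

Definition upd (k : nat -> nat) (p x : nat) : nat -> nat := fun i => if Nat.eqb i p then x else k i.

Fixpoint SumT (K m : nat) (F : (nat -> nat) -> R) : R :=
  match m with O => F (fun _ => O) | S m' => sumN K (fun x => SumT K m' (fun k => F (upd k (S m') x))) end.

Lemma SumT_le K m F G : (forall k, F k <= G k) -> SumT K m F <= SumT K m G.
Proof. revert F G; induction m; simpl; intros F G H; auto. apply sumN_le; intros; apply IHm; auto. Qed.

Lemma SumT_ext K m F G : (forall k, F k = G k) -> SumT K m F = SumT K m G.
Proof. revert F G; induction m; simpl; intros F G H; auto. apply sumN_ext; intros; apply IHm; auto. Qed.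

Lemma SumT_plus K m F G : SumT K m (fun k => F k + G k) = SumT K m F + SumT K m G.
Proof. revert F G; induction m; simpl; intros F G; auto. rewrite <- sumN_plus. apply sumN_ext; intros; apply IHm. Qed.

Lemma SumT_scal K m c F : SumT K m (fun k => c * F k) = c * SumT K m F.
Proof. revert F; induction m; simpl; intros F; auto. rewrite <- sumN_scal. apply sumN_ext; intros; apply IHm. Qed.

Lemma SumT_const K m c : SumT K m (fun _ => c) = INR K ^ m * c.
Proof. induction m; simpl; [lra|]. rewrite sumN_const, IHm. lra. Qed.

Lemma SumT_swap K m E F : SumT K m (fun k => sumN E (fun e => F e k)) = sumN E (fun e => SumT K m (F e)).
Proof. revert F; induction m; simpl; intros F; auto. rewrite sumN_swap. apply sumN_ext; intros. 
  auto. Qed.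

Lemma SumT_exists K m F G : SumT K m F < SumT K m G -> exists k, (forall i, (1 <= i <= m)%nat -> (k i < K)%nat) /\ F k < G k.
Proof. revert F G; induction m; simpl; intros F G H.
- exists (fun _ => O). split; auto. intros; lia.
- destruct (sumN_exists _ _ _ H) as [x [Hx Hlt]]. destruct (IHm _ _ Hlt) as [k [Hk Hk2]].
  exists (upd k (S m) x). split; auto. intros i Hi. unfold upd. destruct (Nat.eqb_spec i (S m)); auto. apply Hk; lia. Qed.

Lemma SumT_prod K m g : SumT K m (fun k => prodI m (fun i => g i (k i))) = prodI m (fun i => sumN K (g i)).
Proof. induction m; simpl; auto.
  rewrite <- IHm. rewrite <- sumN_scal.
  apply sumN_ext. intros x _. rewrite Rmult_comm, <- SumT_scal. apply SumT_ext. intros k.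
  rewrite (prodI_ext m _ (fun i => g i (k i))). unfold upd. rewrite Nat.eqb_refl. lra.
  intros i Hi. unfold upd. destruct (Nat.eqb_spec i (S m)); auto. lia. Qed.

Lemma floor_unique r z : IZR z <= r < IZR z + 1 -> Int_part r = z.
Proof. intros [H1 H2]. unfold Int_part. rewrite <- (tech_up r (z+1)). lia.
  rewrite plus_IZR; simpl; lra. rewrite plus_IZR; simpl; lra. Qed.

Lemma floor_ge r z : IZR z <= r -> (z <= Int_part r)%Z.
Proof. intros H. destruct (base_Int_part r) as [_ H2].
  assert (IZR z - 1 < IZR (Int_part r)) by lra. rewrite <- minus_IZR in H0. apply lt_IZR in H0. lia. Qed.

Lemma floor_le r : IZR (Int_part r) <= r. Proof. apply base_Int_part. Qed.
Lemma floor_gt r : r - 1 < IZR (Int_part r). Proof. destruct (base_Int_part r); lra. Qed.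

Lemma frac_bounds r : 0 <= frac r < 1.
Proof. unfold frac. destruct (base_Int_part r). lra. Qed.

Lemma frac_shift u N : frac (u + IZR N) = frac u.
Proof. unfold frac. rewrite (floor_unique (u + IZR N) (Int_part u + N)). rewrite plus_IZR; lra.
  rewrite plus_IZR. destruct (base_Int_part u). lra. Qed.

Lemma frac_le u : 0 <= u -> frac u <= u.
Proof. intros H. unfold frac. assert (0 <= Int_part u)%Z by (apply floor_ge; simpl; lra).
  apply IZR_le in H0. simpl in H0. lra. Qed.

Lemma Rleb_true x y : Rleb x y = true <-> x <= y.
Proof. unfold Rleb. destruct (Rle_dec x y); split; intros; auto; discriminate. Qed.

Lemma insec_arc al ga y : in_sector al ga (frac y) = true ->
  exists m : Z, al + IZR m <= y <= al + ga + IZR m.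
Proof. unfold in_sector. intros H. apply andb_prop in H as [_ H]. apply Rleb_true in H.
  exists (Int_part y + Int_part (frac y - al))%Z. rewrite plus_IZR.
  pose proof (frac_bounds (frac y - al)). unfold frac in *. lra. Qed.

Lemma arc_insec al ga y : 0 <= ga -> (exists m : Z, al + IZR m <= y <= al + ga + IZR m) ->
  in_sector al ga (frac y) = true.
Proof. intros Hg [m Hm]. unfold in_sector. pose proof (frac_bounds y).
  apply andb_true_intro; split; [apply andb_true_intro; split|]; apply Rleb_true; try lra.
  replace (frac y - al) with ((y - al - IZR m) + IZR (m - Int_part y)).
  rewrite frac_shift. pose proof (frac_le (y - al - IZR m)). lra.
  rewrite minus_IZR. unfold frac. lra. Qed.

Lemma flen_mono (l : list nat) p q : (forall x, In x l -> p x = true -> q x = true) ->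
  (length (filter p l) <= length (filter q l))%nat.
Proof. induction l; simpl; intros H; auto. 
  assert (IH := IHl (fun x Hx => H x (or_intror Hx))).
  destruct (p a) eqn:E. rewrite (H a (or_introl eq_refl) E). simpl. lia. destruct (q a); simpl; lia. Qed.

Lemma flen_or (l : list nat) p q r : (forall x, In x l -> p x = true -> q x = true \/ r x = true) ->
  (length (filter p l) <= length (filter q l) + length (filter r l))%nat.
Proof. induction l; simpl; intros H; auto. 
  assert (IH := IHl (fun x Hx => H x (or_intror Hx))).
  destruct (p a) eqn:E. destruct (H a (or_introl eq_refl) E) as [E1|E1]; rewrite E1; simpl.
  destruct (r a); simpl; lia. destruct (q a); simpl; lia. destruct (q a), (r a); simpl; lia. Qed.

Lemma flen_le (l : list nat) p : (length (filter p l) <= length l)%nat.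
Proof. induction l; simpl; auto. destruct (p a); simpl; lia. Qed.

Definition ind (b : bool) : R := if b then 1 else 0.
Definition bev (K j a L i x : nat) : bool := Nat.leb ((x + (i*j + (K - a))) mod K) L.
Definition Xf n K j a L (k : nat -> nat) : R := sumI n (fun i => ind (bev K j a L i (k i))).
Definition mu n K L := INR n * INR (S L) / INR K.

Lemma exp_pow x m : exp x ^ m = exp (INR m * x).
Proof. induction m; simpl pow. simpl; rewrite Rmult_0_l, exp_0; auto. rewrite IHm, S_INR, <- exp_plus. f_equal; lra. Qed.

Lemma mgf n K j a L h : (0 < K)%nat -> (L < K)%nat ->
  SumT K n (fun k => exp (h * Xf n K j a L k)) <= INR K ^ n * exp (mu n K L * (exp h - 1)).
Proof. intros HK HL. unfold Xf.
  rewrite (SumT_ext _ _ _ (fun k => prodI n (fun i => (fun i x => exp (h * ind (bev K j a L i x))) i (k i))))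
    by (intros; apply exp_sumI).
  rewrite (SumT_prod K n (fun i x => exp (h * ind (bev K j a L i x)))).
  set (c := INR (S L) * exp h + INR (K - S L) * 1).
  rewrite (prodI_ext n _ (fun _ => c)). rewrite prodI_const.
  2:{ intros i _. unfold bev. 
      rewrite (sumN_modshift K (fun y => exp (h * ind (Nat.leb y L)))) by auto.
      unfold c. rewrite <- sumN_ind by auto. apply sumN_ext. intros x _. unfold ind.
      destruct (Nat.leb x L); [f_equal; lra | rewrite Rmult_0_r, exp_0; lra]. }
  assert (HK' : 0 < INR K) by (apply lt_0_INR; auto).
  assert (Hc : c = INR K + INR (S L) * (exp h - 1)).
  { unfold c. rewrite minus_INR by lia. lra. }
  assert (0 <= c). { unfold c. pose proof (exp_pos h). pose proof (pos_INR (S L)). pose proof (pos_INR (K - S L)). nra. }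
  apply Rle_trans with ((INR K * exp (INR (S L) / INR K * (exp h - 1))) ^ n).
  apply pow_incr. split; auto. rewrite Hc.
  pose proof (exp_ineq1_le (INR (S L) / INR K * (exp h - 1))).
  replace (INR K + INR (S L) * (exp h - 1)) with (INR K * (1 + INR (S L) / INR K * (exp h - 1))) by (field; lra).
  apply Rmult_le_compat_l; lra.
  rewrite Rpow_mult_distr, exp_pow. apply Req_le. f_equal. f_equal. unfold mu. field. lra. Qed.

Lemma exp_quad h : 0 <= h <= /2 -> exp h <= 1 + h + 2 * h^2 /\ exp (-h) <= 1 - h + 2 * h^2.
Proof. intros Hh. pose proof (exp_ineq1_le (-h)). pose proof (exp_ineq1_le h).
  pose proof (exp_pos h). pose proof (exp_pos (-h)).
  assert (E : exp h * exp (-h) = 1) by (rewrite <- exp_plus, Rplus_opp_r, exp_0; auto).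
  split; nra. Qed.

Definition TT K := ln (4 * INR K ^ 3).
Definition hh n K L := if Rle_dec (4 * TT K) (mu n K L) then sqrt (TT K) / sqrt (mu n K L) else /2.
Definition lam n K L := 3 * mu n K L * hh n K L + TT K / hh n K L.
Definition Phi n K (k : nat -> nat) := sumN K (fun j => sumN K (fun a => sumN K (fun L =>
   exp (hh n K L * (Xf n K j a L k - mu n K L - lam n K L))
   + exp (- hh n K L * (Xf n K j a L k - mu n K L + lam n K L))))).

Lemma TT_pos K : (1 <= K)%nat -> 0 < TT K.
Proof. intros H. unfold TT. rewrite <- ln_1. apply ln_increasing; [lra|].
  apply le_INR in H. simpl in H. assert (1 <= INR K ^ 3) by (apply pow_R1_Rle; lra). lra. Qed.

Lemma mu_pos n K L : (1 <= n)%nat -> (1 <= K)%nat -> 0 < mu n K L.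
Proof. intros Hn HK. unfold mu. rewrite S_INR. apply le_INR in Hn, HK. simpl in *. pose proof (pos_INR L).
  apply Rdiv_lt_0_compat; nra. Qed.

Lemma hh_bounds n K L : (1 <= n)%nat -> (1 <= K)%nat -> 0 < hh n K L <= /2.
Proof. intros Hn HK. pose proof (TT_pos K HK). pose proof (mu_pos n K L Hn HK). unfold hh.
  destruct (Rle_dec (4 * TT K) (mu n K L)); [|lra].
  assert (0 < sqrt (TT K)) by (apply sqrt_lt_R0; lra). assert (0 < sqrt (mu n K L)) by (apply sqrt_lt_R0; lra).
  assert (2 * sqrt (TT K) <= sqrt (mu n K L)).
  { replace 2 with (sqrt 4). rewrite <- sqrt_mult by lra. apply sqrt_le_1_alt; lra.
    replace 4 with (2*2) by lra. rewrite sqrt_square; lra. }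
  split. apply Rdiv_lt_0_compat; lra. apply Rmult_le_reg_r with (sqrt (mu n K L)); auto.
  unfold Rdiv. rewrite Rmult_assoc, Rinv_l by lra. lra. Qed.

Lemma exp_le x y : x <= y -> exp x <= exp y.
Proof. intros [H|H]. left; apply exp_increasing; auto. subst; lra. Qed.

Lemma event_up n K j a L : (1 <= n)%nat -> (1 <= K)%nat -> (L < K)%nat ->
  SumT K n (fun k => exp (hh n K L * (Xf n K j a L k - mu n K L - lam n K L))) <= INR K ^ n * exp (- TT K).
Proof. intros Hn HK HL. pose proof (hh_bounds n K L Hn HK) as Hh. pose proof (mu_pos n K L Hn HK).
  set (h := hh n K L) in *. set (m := mu n K L) in *.
  rewrite (SumT_ext _ _ _ (fun k => exp (- (h * (m + lam n K L))) * exp (h * Xf n K j a L k)))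
    by (intros; rewrite <- exp_plus; f_equal; ring).
  rewrite SumT_scal. eapply Rle_trans. apply Rmult_le_compat_l. left; apply exp_pos. apply mgf; lia.
  rewrite Rmult_comm, Rmult_assoc, <- exp_plus. apply Rmult_le_compat_l. apply pow_le, pos_INR.
  apply exp_le. unfold lam; fold h m. 
  assert (E : h * (TT K / h) = TT K) by (field; lra).
  destruct (exp_quad h) as [E1 _]; [lra|].
  assert (m * (exp h - 1) <= m * (h + 2 * h^2)) by (apply Rmult_le_compat_l; lra).
  nra. Qed.

Lemma event_lo n K j a L : (1 <= n)%nat -> (1 <= K)%nat -> (L < K)%nat ->
  SumT K n (fun k => exp (- hh n K L * (Xf n K j a L k - mu n K L + lam n K L))) <= INR K ^ n * exp (- TT K).
Proof. intros Hn HK HL. pose proof (hh_bounds n K L Hn HK) as Hh. pose proof (mu_pos n K L Hn HK).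
  set (h := hh n K L) in *. set (m := mu n K L) in *.
  rewrite (SumT_ext _ _ _ (fun k => exp (h * (m - lam n K L)) * exp ((-h) * Xf n K j a L k)))
    by (intros; rewrite <- exp_plus; f_equal; ring).
  rewrite SumT_scal. eapply Rle_trans. apply Rmult_le_compat_l. left; apply exp_pos. apply mgf; lia.
  rewrite Rmult_comm, Rmult_assoc, <- exp_plus. apply Rmult_le_compat_l. apply pow_le, pos_INR.
  apply exp_le. unfold lam; fold h m. 
  assert (E : h * (TT K / h) = TT K) by (field; lra).
  destruct (exp_quad h) as [_ E1]; [lra|].
  assert (m * (exp (-h) - 1) <= m * (-h + 2 * h^2)) by (apply Rmult_le_compat_l; lra).
  nra. Qed.

Lemma SumT_sum_le K m E F c : (forall e, (e < E)%nat -> SumT K m (F e) <= c) ->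
  SumT K m (fun k => sumN E (fun e => F e k)) <= INR E * c.
Proof. intros H. rewrite SumT_swap. rewrite <- sumN_const. apply sumN_le; auto. Qed.

Lemma exp_mTT K : (1 <= K)%nat -> exp (- TT K) = / (4 * INR K ^ 3).
Proof. intros HK. unfold TT. rewrite exp_Ropp, exp_ln; auto. apply le_INR in HK. simpl in HK.
  assert (0 < INR K ^ 3) by (apply pow_lt; lra). lra. Qed.

Lemma Phi_sum n K : (1 <= n)%nat -> (1 <= K)%nat -> SumT K n (Phi n K) <= INR K ^ n / 2.
Proof. intros Hn HK. unfold Phi.
  eapply Rle_trans. apply SumT_sum_le. intros j Hj.
  apply SumT_sum_le. intros a Ha. apply SumT_sum_le. intros L HL.
  rewrite SumT_plus. pose proof (event_up n K j a L Hn HK HL). pose proof (event_lo n K j a L Hn HK HL).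
  apply Rplus_le_compat; eauto.
  rewrite exp_mTT by auto. apply le_INR in HK. simpl in HK. apply Req_le. field. lra. Qed.

Lemma good_exists n K : (1 <= n)%nat -> (1 <= K)%nat ->
  exists k, (forall i, (1 <= i <= n)%nat -> (k i < K)%nat) /\
    forall j a L, (j < K)%nat -> (a < K)%nat -> (L < K)%nat ->
      Xf n K j a L k < mu n K L + lam n K L /\ mu n K L - lam n K L < Xf n K j a L k.
Proof. intros Hn HK.
  assert (H : SumT K n (Phi n K) < SumT K n (fun _ => 1)).
  { rewrite SumT_const. eapply Rle_lt_trans. apply Phi_sum; auto. apply le_INR in HK. simpl in HK.
    assert (0 < INR K ^ n) by (apply pow_lt; lra). lra. }
  destruct (SumT_exists _ _ _ _ H) as [k [Hk Hlt]]. exists k. split; auto.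
  intros j a L Hj Ha HL. pose proof (hh_bounds n K L Hn HK) as Hh.
  set (e1 := exp (hh n K L * (Xf n K j a L k - mu n K L - lam n K L))).
  set (e2 := exp (- hh n K L * (Xf n K j a L k - mu n K L + lam n K L))).
  assert (Hs : e1 + e2 <= Phi n K k).
  { unfold Phi, e1, e2. 
    assert (P0 : forall j a L, 0 <= exp (hh n K L * (Xf n K j a L k - mu n K L - lam n K L))
   + exp (- hh n K L * (Xf n K j a L k - mu n K L + lam n K L))) by (intros x y z; pose proof (exp_pos (hh n K z * (Xf n K x y z k - mu n K z - lam n K z))); pose proof (exp_pos (- hh n K z * (Xf n K x y z k - mu n K z + lam n K z))); lra).
    set (G := fun j a L => exp (hh n K L * (Xf n K j a L k - mu n K L - lam n K L))
   + exp (- hh n K L * (Xf n K j a L k - mu n K L + lam n K L))).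
    change (G j a L <= sumN K (fun j => sumN K (fun a => sumN K (fun L => G j a L)))).
    assert (P1 : forall j a, 0 <= sumN K (fun L => G j a L)) by (intros; apply sumN_nonneg; intros; apply P0).
    assert (P2 : forall j, 0 <= sumN K (fun a => sumN K (fun L => G j a L))) by (intros; apply sumN_nonneg; intros; apply P1).
    apply Rle_trans with (sumN K (fun L => G j a L)). apply (sumN_term K (fun L => G j a L)); auto. intros; apply P0.
    apply Rle_trans with (sumN K (fun a => sumN K (fun L => G j a L))). apply (sumN_term K (fun a => sumN K (fun L => G j a L))); auto.
    apply (sumN_term K (fun j => sumN K (fun a => sumN K (fun L => G j a L)))); auto. }
  assert (e1 < 1) by (pose proof (exp_pos (- hh n K L * (Xf n K j a L k - mu n K L + lam n K L))); fold e2 in H0; lra).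
  assert (e2 < 1) by (pose proof (exp_pos (hh n K L * (Xf n K j a L k - mu n K L - lam n K L))); fold e1 in H1; lra).
  unfold e1, e2 in *. rewrite <- exp_0 in H0, H1. apply exp_lt_inv in H0, H1. split; nra. Qed.

Definition yy K (k : nat -> nat) t i := INR (k i) / INR K + INR i * t.
Definition YY (k : nat -> nat) J (i : nat) : Z := (Z.of_nat (k i) + Z.of_nat i * J)%Z.

Lemma fact1 n K k t i : (1 <= K)%nat -> (1 <= i <= n)%nat ->
  IZR (YY k (Int_part (t * INR K)) i) <= yy K k t i * INR K < IZR (YY k (Int_part (t * INR K)) i) + INR n.
Proof. intros HK Hi. unfold YY, yy. rewrite plus_IZR, mult_IZR, <- !INR_IZR_INZ.
  assert (0 < INR K) by (apply lt_0_INR; lia).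
  replace ((INR (k i) / INR K + INR i * t) * INR K) with (INR (k i) + INR i * (t * INR K)) by (field; lra).
  pose proof (floor_le (t * INR K)). pose proof (floor_gt (t * INR K)).
  assert (1 <= INR i) by (change 1 with (INR 1); apply le_INR; lia). assert (INR i <= INR n) by (apply le_INR; lia).
  split; nra. Qed.

Lemma fact2 K k J A i : (1 <= K)%nat ->
  Z.of_nat ((k i + (i * Z.to_nat (J mod Z.of_nat K) + (K - Z.to_nat (A mod Z.of_nat K)))) mod K)
  = ((YY k J i - A) mod Z.of_nat K)%Z.
Proof. intros HK. assert (HKz : (0 < Z.of_nat K)%Z) by lia.
  pose proof (Z.mod_pos_bound J _ HKz). pose proof (Z.mod_pos_bound A _ HKz).
  rewrite Nat2Z.inj_mod, Nat2Z.inj_add, Nat2Z.inj_add, Nat2Z.inj_mul, Nat2Z.inj_sub by lia.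
  rewrite !Z2Nat.id by lia. unfold YY.
  rewrite (Z.div_mod J (Z.of_nat K)) at 2 by lia. rewrite (Z.div_mod A (Z.of_nat K)) at 2 by lia.
  set (q1 := (J / Z.of_nat K)%Z). set (q2 := (A / Z.of_nat K)%Z).
  set (r1 := (J mod Z.of_nat K)%Z). set (r2 := (A mod Z.of_nat K)%Z).
  replace (Z.of_nat (k i) + Z.of_nat i * (Z.of_nat K * q1 + r1) - (Z.of_nat K * q2 + r2))%Z
    with (Z.of_nat (k i) + (Z.of_nat i * r1 + (Z.of_nat K - r2)) + (Z.of_nat i * q1 - q2 - 1) * Z.of_nat K)%Z by ring.
  rewrite Z.mod_add by lia. auto. Qed.

Lemma mem_upper n K k t al ga i : (1 <= K)%nat -> (1 <= i <= n)%nat ->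
  let A := (Int_part (al * INR K) - Z.of_nat n)%Z in
  let B := Int_part ((al + ga) * INR K) in
  (0 <= B - A < Z.of_nat K)%Z ->
  in_sector al ga (frac (yy K k t i)) = true ->
  bev K (Z.to_nat (Int_part (t * INR K) mod Z.of_nat K)) (Z.to_nat (A mod Z.of_nat K)) (Z.to_nat (B - A)) i (k i) = true.
Proof. intros HK Hi A B HAB Hs. destruct (insec_arc _ _ _ Hs) as [m Hm].
  pose proof (fact1 n K k t i HK Hi) as F1. set (J := Int_part (t * INR K)) in *.
  assert (HK0 : 0 < INR K) by (apply lt_0_INR; lia).
  assert (Hlo : (A + m * Z.of_nat K < YY k J i)%Z).
  { apply lt_IZR. unfold A. rewrite plus_IZR, minus_IZR, mult_IZR, <- !INR_IZR_INZ.
    pose proof (floor_le (al * INR K)). assert ((al + IZR m) * INR K <= yy K k t i * INR K) by nra. nra. }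
  assert (Hhi : (YY k J i - m * Z.of_nat K <= B)%Z).
  { unfold B. apply floor_ge. rewrite minus_IZR, mult_IZR, <- INR_IZR_INZ.
    assert (yy K k t i * INR K <= (al + ga + IZR m) * INR K) by nra. nra. }
  unfold bev. apply Nat.leb_le. apply Nat2Z.inj_le. rewrite fact2 by auto. rewrite Z2Nat.id by lia.
  rewrite <- (Z.mod_unique (YY k J i - A) (Z.of_nat K) m (YY k J i - A - Z.of_nat K * m)); lia. Qed.

Lemma mem_lower n K k t al ga i : (1 <= K)%nat -> (1 <= i <= n)%nat ->
  let A := (Int_part (al * INR K) + 1)%Z in
  let B := (Int_part ((al + ga) * INR K) - Z.of_nat n)%Z in
  (0 <= B - A)%Z -> 0 <= ga ->
  bev K (Z.to_nat (Int_part (t * INR K) mod Z.of_nat K)) (Z.to_nat (A mod Z.of_nat K)) (Z.to_nat (B - A)) i (k i) = true ->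
  in_sector al ga (frac (yy K k t i)) = true.
Proof. intros HK Hi A B HAB Hg Hb. 
  pose proof (fact1 n K k t i HK Hi) as F1. set (J := Int_part (t * INR K)) in *.
  assert (HK0 : 0 < INR K) by (apply lt_0_INR; lia).
  assert (HKz : (0 < Z.of_nat K)%Z) by lia.
  unfold bev in Hb. apply Nat.leb_le in Hb. apply Nat2Z.inj_le in Hb. rewrite fact2 in Hb by auto.
  rewrite Z2Nat.id in Hb by lia.
  pose proof (Z.div_mod (YY k J i - A) (Z.of_nat K) ltac:(lia)). pose proof (Z.mod_pos_bound (YY k J i - A) _ HKz).
  set (q := ((YY k J i - A) / Z.of_nat K)%Z) in *. set (r := ((YY k J i - A) mod Z.of_nat K)%Z) in *.
  apply arc_insec; auto. exists q.
  assert (H1 : (A + q * Z.of_nat K <= YY k J i)%Z) by lia.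
  assert (H2 : (YY k J i <= B + q * Z.of_nat K)%Z) by lia.
  apply IZR_le in H1, H2. unfold A, B in *. rewrite plus_IZR, mult_IZR, plus_IZR, <- INR_IZR_INZ in H1.
  rewrite plus_IZR, minus_IZR, mult_IZR, <- !INR_IZR_INZ in H2.
  pose proof (floor_gt (al * INR K)). pose proof (floor_le ((al + ga) * INR K)).
  split; apply Rmult_le_reg_r with (INR K); auto; rewrite ?Rmult_plus_distr_r.
  lra. lra. Qed.

Definition goodk n K (k : nat -> nat) := forall j a L, (j < K)%nat -> (a < K)%nat -> (L < K)%nat ->
      Xf n K j a L k < mu n K L + lam n K L /\ mu n K L - lam n K L < Xf n K j a L k.

Lemma Nsec_eq n K k t al ga : N_sector al ga n (fun i => INR (k i) / INR K + INR i * t)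
  = length (filter (fun i => in_sector al ga (frac (yy K k t i))) (seq 1 n)).
Proof. reflexivity. Qed.

Lemma Xf_eq n K j a L k : Xf n K j a L k = INR (length (filter (fun i => bev K j a L i (k i)) (seq 1 n))).
Proof. rewrite len_filter_seq. reflexivity. Qed.

Lemma INR_S_toNat z : (0 <= z)%Z -> INR (S (Z.to_nat z)) = IZR z + 1.
Proof. intros H. rewrite S_INR, INR_IZR_INZ, Z2Nat.id; auto. Qed.

Lemma sector_upper n k t al ga : (2 <= n)%nat -> 0 <= ga <= 1 -> goodk n (n*n) k ->
  let N := INR (N_sector al ga n (fun i => INR (k i) / INR (n*n) + INR i * t)) in
  N - ga * INR n <= 2 \/ exists L, (L < n*n)%nat /\ mu n (n*n) L <= ga * INR n + 2 /\ N < mu n (n*n) L + lam n (n*n) L.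
Proof. intros Hn Hg Hk N. set (K := (n*n)%nat) in *.
  assert (HK : (1 <= K)%nat) by (unfold K; nia).
  assert (HKr : INR K = INR n * INR n) by (unfold K; apply mult_INR).
  assert (Hnr : 2 <= INR n) by (change 2 with (INR 2); apply le_INR; auto).
  set (A := (Int_part (al * INR K) - Z.of_nat n)%Z).
  set (B := Int_part ((al + ga) * INR K)).
  assert (HKp : 0 < INR K) by nra.
  assert (Hb1 : (Int_part (al * INR K) <= B)%Z).
  { apply floor_ge. pose proof (floor_le (al * INR K)). nra. }
  assert (Hr : IZR (B - A) < ga * INR K + INR n + 1).
  { unfold A, B. rewrite !minus_IZR, <- INR_IZR_INZ. pose proof (floor_le ((al+ga) * INR K)). pose proof (floor_gt (al * INR K)). nra. }
  assert (HN : N <= INR n).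
  { unfold N. apply le_INR. rewrite <- (length_seq n 1) at 2. apply flen_le. }
  destruct (Z_lt_le_dec (B - A) (Z.of_nat K)) as [HL|HL].
  - right. exists (Z.to_nat (B - A)). split. lia. 
    assert (HXf : N <= Xf n K (Z.to_nat (Int_part (t * INR K) mod Z.of_nat K)) (Z.to_nat (A mod Z.of_nat K)) (Z.to_nat (B - A)) k).
    { unfold N. rewrite Nsec_eq, Xf_eq. apply le_INR. apply flen_mono. intros i Hi Hs. apply in_seq in Hi.
      apply (mem_upper n); auto; try lia. }
    assert (HKz : (0 < Z.of_nat K)%Z) by lia.
    destruct (Hk (Z.to_nat (Int_part (t * INR K) mod Z.of_nat K)) (Z.to_nat (A mod Z.of_nat K)) (Z.to_nat (B - A))) as [G1 _].
    pose proof (Z.mod_pos_bound (Int_part (t * INR K)) _ HKz); lia.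
    pose proof (Z.mod_pos_bound A _ HKz); lia. lia.
    split; [|lra]. unfold mu. rewrite INR_S_toNat by lia. rewrite HKr in *.
    apply Rmult_le_reg_r with (INR n * INR n). nra. unfold Rdiv. rewrite Rmult_assoc, Rinv_l by nra. nra.
  - left. apply IZR_le in HL. rewrite <- INR_IZR_INZ in HL. rewrite HKr in *. nra. Qed.

Lemma sector_lower n k t al ga : (2 <= n)%nat -> 0 <= ga <= 1 -> goodk n (n*n) k ->
  let N := INR (N_sector al ga n (fun i => INR (k i) / INR (n*n) + INR i * t)) in
  ga * INR n - N <= 2 \/ exists L, (L < n*n)%nat /\ mu n (n*n) L <= ga * INR n + 2 /\
     ga * INR n - 2 <= mu n (n*n) L /\ mu n (n*n) L - lam n (n*n) L < N.
Proof. intros Hn Hg Hk N. set (K := (n*n)%nat) in *.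
  assert (HK : (1 <= K)%nat) by (unfold K; nia).
  assert (HKr : INR K = INR n * INR n) by (unfold K; apply mult_INR).
  assert (Hnr : 2 <= INR n) by (change 2 with (INR 2); apply le_INR; auto).
  set (A := (Int_part (al * INR K) + 1)%Z).
  set (B := (Int_part ((al + ga) * INR K) - Z.of_nat n)%Z).
  assert (HKp : 0 < INR K) by nra.
  assert (Hr1 : IZR (B - A) < ga * INR K - INR n).
  { unfold A, B. rewrite !minus_IZR, plus_IZR, <- INR_IZR_INZ. pose proof (floor_le ((al+ga) * INR K)). pose proof (floor_gt (al * INR K)). nra. }
  assert (Hr2 : ga * INR K - INR n - 2 < IZR (B - A)).
  { unfold A, B. rewrite !minus_IZR, plus_IZR, <- INR_IZR_INZ. pose proof (floor_gt ((al+ga) * INR K)). pose proof (floor_le (al * INR K)). nra. }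
  assert (HN : 0 <= N) by apply pos_INR.
  destruct (Z_lt_le_dec (B - A) 0) as [HL|HL].
  - left. assert (HL' : (B - A <= -1)%Z) by lia. apply IZR_le in HL'. rewrite HKr in *. nra.
  - right. assert (HL2 : (B - A < Z.of_nat K)%Z).
    { apply lt_IZR. rewrite <- INR_IZR_INZ. nra. }
    exists (Z.to_nat (B - A)). split. lia. 
    assert (HXf : Xf n K (Z.to_nat (Int_part (t * INR K) mod Z.of_nat K)) (Z.to_nat (A mod Z.of_nat K)) (Z.to_nat (B - A)) k <= N).
    { unfold N. rewrite Nsec_eq, Xf_eq. apply le_INR. apply flen_mono. intros i Hi Hs. apply in_seq in Hi.
      apply (mem_lower n K k t al ga i); auto; try lia; try lra. }
    assert (HKz : (0 < Z.of_nat K)%Z) by lia.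
    destruct (Hk (Z.to_nat (Int_part (t * INR K) mod Z.of_nat K)) (Z.to_nat (A mod Z.of_nat K)) (Z.to_nat (B - A))) as [_ G1].
    pose proof (Z.mod_pos_bound (Int_part (t * INR K)) _ HKz); lia.
    pose proof (Z.mod_pos_bound A _ HKz); lia. lia.
    unfold mu. rewrite INR_S_toNat by lia. rewrite HKr in *. unfold mu in G1. rewrite INR_S_toNat in G1 by lia.
    rewrite HKr in G1.
    assert (E : forall x, INR n * x / (INR n * INR n) = x / INR n) by (intros; field; lra).
    rewrite E in *. split; [|split; [|lra]].
    + apply Rmult_le_reg_r with (INR n). lra. unfold Rdiv. rewrite Rmult_assoc, Rinv_l by lra. nra.
    + apply Rmult_le_reg_r with (INR n). lra. unfold Rdiv. rewrite Rmult_assoc, Rinv_l by lra. nra. Qed.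

Lemma ln_le' x y : 0 < x -> x <= y -> ln x <= ln y.
Proof. intros H [H1|H1]. left; apply ln_increasing; auto. subst; lra. Qed.

Lemma ln2_facts : 0 < ln 2 < 1.
Proof. split. rewrite <- ln_1. apply ln_increasing; lra.
  rewrite <- ln_exp with 1. apply ln_increasing. lra. pose proof (exp_ineq1 1). lra. Qed.

Lemma l2_facts n : (2 <= n)%nat -> 1 <= log2 (INR n) /\ ln (INR n) <= log2 (INR n).
Proof. intros Hn. assert (Hnr : 2 <= INR n) by (change 2 with (INR 2); apply le_INR; auto).
  pose proof ln2_facts. unfold log2. assert (ln 2 <= ln (INR n)) by (apply ln_le'; lra).
  split. apply Rmult_le_reg_r with (ln 2). lra. unfold Rdiv. rewrite Rmult_assoc, Rinv_l; lra.
  apply Rmult_le_reg_r with (ln 2). lra. unfold Rdiv. rewrite Rmult_assoc, Rinv_l by lra. nra. Qed.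

Lemma TT_bound n : (2 <= n)%nat -> TT (n*n) <= 8 * log2 (INR n).
Proof. intros Hn. assert (Hnr : 2 <= INR n) by (change 2 with (INR 2); apply le_INR; auto).
  destruct (l2_facts n Hn). unfold TT. rewrite mult_INR.
  apply Rle_trans with (ln (INR n ^ 8)). apply ln_le'.
  assert (0 < INR n * INR n) by nra. assert (0 < (INR n * INR n)^3) by (apply pow_lt; lra). lra.
  assert (4 <= INR n * INR n) by nra.
  replace (INR n ^ 8) with ((INR n * INR n) * (INR n * INR n)^3) by ring.
  assert (0 < (INR n * INR n)^3) by (apply pow_lt; nra). nra.
  rewrite ln_pow by lra. simpl INR. lra. Qed.

Lemma lam_bound n L ga : (2 <= n)%nat -> 0 <= ga -> mu n (n*n) L <= ga * INR n + 2 ->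
  lam n (n*n) L <= 12 * sqrt (INR n * ga * log2 (INR n)) + 80 * log2 (INR n).
Proof. intros Hn Hg Hmu. assert (Hnr : 2 <= INR n) by (change 2 with (INR 2); apply le_INR; auto).
  destruct (l2_facts n Hn) as [Hl1 Hl2]. pose proof (TT_bound n Hn) as HT.
  assert (HK : (1 <= n*n)%nat) by nia.
  pose proof (TT_pos _ HK) as HT0. pose proof (mu_pos n (n*n) L ltac:(lia) HK) as Hm0.
  set (l := log2 (INR n)) in *. set (T := TT (n*n)) in *. set (m := mu n (n*n) L) in *.
  set (S := sqrt (INR n * ga * l)).
  assert (HS : S * S = INR n * ga * l) by (apply sqrt_sqrt; apply Rmult_le_pos; nra).
  assert (HS0 : 0 <= S) by apply sqrt_pos.
  unfold lam, hh; fold T m. destruct (Rle_dec (4 * T) m) as [Hc|Hc].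
  - set (r := sqrt T). set (q := sqrt m).
    assert (Hr : r * r = T) by (apply sqrt_sqrt; lra). assert (Hq : q * q = m) by (apply sqrt_sqrt; lra).
    assert (0 < r) by (apply sqrt_lt_R0; lra). assert (0 < q) by (apply sqrt_lt_R0; lra).
    replace (3 * m * (r / q) + T / (r / q)) with (4 * (r * q)) by (rewrite <- Hr, <- Hq; field; lra).
    assert ((r*q) * (r*q) <= (3 * S + 4 * l) * (3 * S + 4 * l)).
    { replace ((r*q)*(r*q)) with (T * m) by (rewrite <- Hr, <- Hq; ring). nra. }
    assert (r * q <= 3 * S + 4 * l) by nra. lra.
  - replace (T / / 2) with (2 * T) by field. lra. Qed.

Lemma sector_bound n k t al ga : (2 <= n)%nat -> 0 <= ga <= 1 -> goodk n (n*n) k ->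
  Rabs (INR (N_sector al ga n (fun i => INR (k i) / INR (n*n) + INR i * t)) - ga * INR n)
  <= 100 * (sqrt (INR n * ga * log2 (INR n)) + log2 (INR n)).
Proof. intros Hn Hg Hk. destruct (l2_facts n Hn) as [Hl1 _].
  pose proof (sqrt_pos (INR n * ga * log2 (INR n))).
  apply Rabs_le. split.
  - destruct (sector_lower n k t al ga Hn Hg Hk) as [Hc|[L [HL [H1 [H2 H3]]]]]. lra.
    pose proof (lam_bound n L ga Hn (proj1 Hg) H1). lra.
  - destruct (sector_upper n k t al ga Hn Hg Hk) as [Hc|[L [HL [H1 H3]]]]. lra.
    pose proof (lam_bound n L ga Hn (proj1 Hg) H1). lra. Qed.

Lemma int_to_sec a b r : 0 <= a -> a <= b -> b <= 1 ->
  Rleb a (frac r) && Rleb (frac r) b = true -> in_sector a (b - a) (frac r) = true.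
Proof. intros Ha Hab Hb H. apply andb_prop in H as [H1 H2]. apply Rleb_true in H1, H2.
  apply arc_insec. lra. exists (Int_part r). unfold frac in *. lra. Qed.

Lemma sec_to_int a b r : 0 <= a -> a <= b -> b <= 1 ->
  in_sector a (b - a) (frac r) = true ->
  Rleb a (frac r) && Rleb (frac r) b = true \/ in_sector 0 0 (frac r) = true.
Proof. intros Ha Hab Hb H. destruct (insec_arc _ _ _ H) as [m Hm].
  destruct (Rlt_le_dec (r - IZR m) 1) as [Hl|Hl].
  - left. assert (E : Int_part r = m) by (apply floor_unique; lra).
    unfold frac. rewrite E. apply andb_true_intro; split; apply Rleb_true; lra.
  - right. apply arc_insec. lra. exists (m + 1)%Z. rewrite plus_IZR. lra. Qed.

Lemma INR_le_pow2 n : INR n <= 2 ^ n.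
Proof. induction n. simpl; lra. rewrite S_INR. simpl. assert (1 <= 2 ^ n) by (apply pow_R1_Rle; lra). lra. Qed.

Lemma l2_le_n n : (2 <= n)%nat -> log2 (INR n) <= INR n.
Proof. intros Hn. assert (Hnr : 2 <= INR n) by (change 2 with (INR 2); apply le_INR; auto).
  pose proof ln2_facts. unfold log2. apply Rmult_le_reg_r with (ln 2). lra.
  unfold Rdiv. rewrite Rmult_assoc, Rinv_l by lra. rewrite Rmult_1_r.
  rewrite <- ln_pow by lra. apply ln_le'. lra. apply INR_le_pow2. Qed.

Theorem theorem4p1 :
  exists C : R, 0 < C /\
  exists C' : R, 0 < C' /\
  forall n : nat, (2 <= n)%nat ->
    exists s : nat -> R,
      (forall i : nat, (1 <= i <= n)%nat -> 0 <= s i < 1) /\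
      (forall t gamma alpha : R, 0 <= gamma <= 1 ->
         Rabs (INR (N_sector alpha gamma n (fun i => s i + INR i * t)) - gamma * INR n)
           <= C * (sqrt (INR n * gamma * log2 (INR n)) + log2 (INR n))) /\
      (forall t : R, bias_le n (fun i => s i + INR i * t) (C' * sqrt (INR n * log2 (INR n)))).
Proof. exists 100. split. lra. exists 300. split. lra.
  intros n Hn. assert (HK : (1 <= n*n)%nat) by nia.
  destruct (good_exists n (n*n) ltac:(lia) HK) as [k [Hk Hg]].
  exists (fun i => INR (k i) / INR (n*n)). split; [|split].
  - intros i Hi. pose proof (Hk i Hi). assert (0 < INR (n*n)) by (apply lt_0_INR; lia).
    assert (INR (k i) < INR (n*n)) by (apply lt_INR; auto). pose proof (pos_INR (k i)).
    split. unfold Rdiv; apply Rmult_le_pos; [lra|left; apply Rinv_0_lt_compat; lra]. apply Rmult_lt_reg_r with (INR (n*n)); auto.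
    unfold Rdiv. rewrite Rmult_assoc, Rinv_l; lra.
  - intros t ga al Hga. apply sector_bound; auto.
  - intros t a b Ha Hab Hb. 
    assert (Hnr : 2 <= INR n) by (change 2 with (INR 2); apply le_INR; auto).
    destruct (l2_facts n Hn) as [Hl1 _]. pose proof (l2_le_n n Hn).
    set (r := fun i => INR (k i) / INR (n*n) + INR i * t).
    set (X := INR (N_interval a b n r)).
    set (Y := INR (N_sector a (b - a) n r)).
    set (Z := INR (N_sector 0 0 n r)).
    assert (HXY : X <= Y).
    { apply le_INR. apply flen_mono. intros i _ Hi. apply int_to_sec; auto. }
    assert (HYXZ : Y <= X + Z).
    { unfold X, Y, Z. rewrite <- plus_INR. apply le_INR. apply flen_or. intros i _ Hi. apply sec_to_int; auto. }
    pose proof (sector_bound n k t a (b - a) Hn ltac:(lra) Hg) as B1. fold r Y in B1.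
    pose proof (sector_bound n k t 0 0 Hn ltac:(lra) Hg) as B2. fold r Z in B2.
    replace (INR n * 0 * log2 (INR n)) with 0 in B2 by ring. rewrite sqrt_0 in B2.
    set (l := log2 (INR n)) in *. set (W := sqrt (INR n * l)).
    assert (HS : sqrt (INR n * (b - a) * l) <= W).
    { apply sqrt_le_1_alt. assert (0 <= INR n * l) by nra. nra. }
    assert (HW : l <= W).
    { unfold W. rewrite <- (sqrt_square l) at 1 by lra. apply sqrt_le_1_alt. nra. }
    pose proof (Rle_abs (Y - (b - a) * INR n)) as R1. pose proof (Rle_abs (- (Y - (b - a) * INR n))) as R2.
    rewrite Rabs_Ropp in R2.
    rewrite Rmult_0_l, Rminus_0_r in B2. pose proof (Rle_abs Z).
    pose proof (sqrt_pos (INR n * (b - a) * l)).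
    apply Rabs_le. split; nra. Qed.
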